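(* Let $\Pi=\{\Pi_\phi\}$ be a partition of a finite set of paths $\mathcal{P}$ into pairwise disjoint cells, and let $\Phi$ be a finite well-behaved set of filling classes $\phi=(Z_\phi,\Pi_\phi)$, partially ordered by $\ge_\xi$. Let $Z_\Phi=\bigcup_{\phi\in\Phi}Z_\phi$, where each PGT $\gamma$ has duration $E_\gamma>0$, minimum separation $t^{\mathrm{minsep}}_\gamma\ge0$ and positive integer minimal allocation $\mathcal{M}_\gamma$. Let $\Omega$ be the set of all totally ordered subsets (chains) of $(\Phi,\ge_\xi)$. Then for every $t_0$ there exists a valid schedule containing exactly $\mathcal{M}_\gamma$ PGAs of every $\gamma\in Z_\Phi$, all of whose PGAs lie within $[t_0,\,t_0+\mathcal{R}(Z_\Phi)]$, where $$\mathcal{R}(Z_\Phi)=\max_{\Theta\in\Omega}\ \sum_{\theta\in\Theta}R(Z_\theta).$$ In particular $\mathcal{R}(Z_\Phi)$ upper-bounds the minimum time needed to execute such a valid schedule.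
   Context: Let $\mathcal{R}$ be the set of vertices on paths of $\mathcal{P}$; for $Q\subseteq\mathcal{P}$, $\xi(Q)=\{r\in\mathcal{R}:\exists\pi\in Q,\ r\in\pi\}$, and $\xi(\pi)$ denotes the vertex set of a single path. Order: $\phi>_\xi\psi$ iff $\xi(\Pi_\psi)\subsetneq\xi(\Pi_\phi)$. $\Phi=\{\phi_i\}$ is well-behaved if (1) $\xi(\Pi_{\phi_i})\ne\xi(\Pi_{\phi_j})$ for $i\ne j$, and (2) for $i\ne j$, $\xi(\Pi_{\phi_i})\cap\xi(\Pi_{\phi_j})\ne\emptyset$ implies one of $\xi(\Pi_{\phi_i}),\xi(\Pi_{\phi_j})$ is a proper subset of the other. Each $Z_\phi$ is a set of PGTs with $\pi_\gamma\in\Pi_\phi$. For $Z_\phi=\{\gamma_0,\dots,\gamma_{M-1}\}$ indexed with $\mathcal{M}_{\gamma_0}\le\dots\le\mathcal{M}_{\gamma_{M-1}}$, $E_x=E_{\gamma_x}$, $\tau_x=t^{\mathrm{minsep}}_{\gamma_x}$: $n_0=\mathcal{M}_{\gamma_0}-1$, $n_x=\mathcal{M}_{\gamma_x}-\mathcal{M}_{\gamma_{x-1}}$, $c_x=\max(\max_{y\ge x}(E_y+\tau_y),\sum_{y=x}^{M-1}E_y)$, $R(Z_\phi)=\sum_x(n_xc_x+E_x)$, $R(\emptyset)=0$. A PGA of $\gamma$ is an interval $[s,s+E_\gamma)$ assigned to $\gamma$; a schedule is a finite set of PGAs. A resource conflict: distinct PGAs $[s,e)$ of $\gamma$ and $[s',e')$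 of $\gamma'$ with $\xi(\pi_\gamma)\cap\xi(\pi_{\gamma'})\ne\emptyset$ and $s\le s'<e$. A minsep violation: time-consecutive PGAs $[s,e)$, $[s'',e'')$ of the same $\gamma$ with $s''-e<t^{\mathrm{minsep}}_\gamma$. A schedule is valid if it has neither. *)

(* Defs.v *)
From HB Require Import structures.
From mathcomp Require Import all_boot all_order all_algebra.
Set Implicit Arguments. Unset Strict Implicit. Unset Printing Implicit Defensive.
Import Order.TTheory GRing.Theory Num.Theory.
Local Open Scope ring_scope.

Section Defs.
Variables (V Pth Cls G : finType) (R : realFieldType).
Variable xi : Pth -> {set V}.
Variable PiC : Cls -> {set Pth}.
Variable Z : Cls -> {set G}.
Variable pathOf : G -> Pth.
Variables (E tau : G -> R).
Variable M : G -> nat.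

Definition xiQ (Q : {set Pth}) : {set V} := \bigcup_(pi in Q) xi pi.
Definition xiC (phi : Cls) : {set V} := xiQ (PiC phi).

Definition ge_xi (phi psi : Cls) : bool := (phi == psi) || (xiC psi \proper xiC phi).

Definition well_behaved (Phi : {set Cls}) : Prop :=
  (forall phi psi, phi \in Phi -> psi \in Phi -> phi != psi -> xiC phi != xiC psi) /\
  (forall phi psi, phi \in Phi -> psi \in Phi -> phi != psi ->
     xiC phi :&: xiC psi != set0 ->
     (xiC phi \proper xiC psi) || (xiC psi \proper xiC phi)).

Definition is_chain (Theta : {set Cls}) : bool :=
  [forall th1 in Theta, forall th2 in Theta, ge_xi th1 th2 || ge_xi th2 th1].

(* c_x computed on the suffix s = [gamma_x; ...; gamma_{M-1}] *)
Definition cval (s : seq G) : R :=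
  Num.max (\big[Num.max/0]_(y <- s) (E y + tau y)) (\sum_(y <- s) E y).

(* sum_{x} (n_x c_x + E_x), with prev = M_{gamma_{x-1}} (and prev = 1 at x = 0,
   so that n_0 = M_{gamma_0} - 1) *)
Fixpoint Rseq (prev : nat) (s : seq G) : R :=
  match s with
  | [::] => 0
  | g :: s' => ((M g - prev)%:R * cval s + E g) + Rseq (M g) s'
  end.

Definition Rcls (phi : Cls) : R :=
  Rseq 1 (sort (fun a b => (M a <= M b)%N) (enum (Z phi))).

Definition Rtot (Phi : {set Cls}) : R :=
  \big[Num.max/0]_(Theta : {set Cls} | (Theta \subset Phi) && is_chain Theta)
     \sum_(th in Theta) Rcls th.

Definition ZPhi (Phi : {set Cls}) : {set G} := \bigcup_(phi in Phi) Z phi.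

(* A schedule: finite set of PGAs (gamma, s) meaning interval [s, s + E gamma). *)
Definition resource_conflict (S : seq (G * R)) : Prop :=
  exists a b, [/\ a \in S, b \in S, a != b,
    xi (pathOf a.1) :&: xi (pathOf b.1) != set0 &
    a.2 <= b.2 < a.2 + E a.1].

Definition minsep_violation (S : seq (G * R)) : Prop :=
  exists a b, [/\ a \in S, b \in S, a.1 = b.1 & a.2 < b.2] /\
    (forall c, c \in S -> c.1 = a.1 -> ~ (a.2 < c.2 < b.2)) /\
    b.2 - (a.2 + E a.1) < tau a.1.

Definition valid_schedule (S : seq (G * R)) : Prop :=
  uniq S /\ ~ resource_conflict S /\ ~ minsep_violation S.

End Defs.

(* Main.v *)
Require Import Defs.
From HB Require Import structures.
From mathcomp Require Import all_boot all_order all_algebra.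
From mathcomp Require Import ring lra zify.
Import Order.TTheory GRing.Theory Num.Theory.
Set Implicit Arguments. Unset Strict Implicit. Unset Printing Implicit Defensive.
Local Open Scope ring_scope.

Section Intra.
Variables (G : finType) (R : realFieldType) (E tau : G -> R) (M : G -> nat).

Definition compat (a b : G * R) : bool :=
  (a.2 + E a.1 <= b.2) && ((a.1 == b.1) ==> (a.2 + E a.1 + tau a.1 <= b.2)).

Fixpoint off (s : seq G) (y : G) : R :=
  match s with [::] => 0 | z :: s' => if z == y then 0 else E z + off s' y end.

Fixpoint round (T : R) (s : seq G) : seq (G * R) :=
  match s with [::] => [::] | y :: s' => (y, T) :: round (T + E y) s' end.

Fixpoint rounds (n : nat) (T : R) (s : seq G) : seq (G * R) :=
  match n with 0%N => [::] | n'.+1 => round T s ++ rounds n' (T + cval E tau s) s end.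

Fixpoint gen (prev : nat) (T : R) (s : seq G) : seq (G * R) :=
  match s with
  | [::] => [::]
  | g :: s' => rounds (M g - prev) T s ++
       (g, T + (M g - prev)%:R * cval E tau s) ::
       gen (M g) (T + (M g - prev)%:R * cval E tau s + E g) s'
  end.

Definition pos (s : seq G) := forall y, y \in s -> 0 < E y /\ 0 <= tau y.

Lemma pos_cons y s : pos (y :: s) -> pos s.
Proof. by move=> h z hz; apply: h; rewrite inE hz orbT. Qed.

Lemma sumE_ge0 s : pos s -> 0 <= \sum_(z <- s) E z.
Proof.
elim: s => [|y s IH] h; first by rewrite big_nil.
rewrite big_cons; have [hy _] := h y (mem_head _ _).
have := IH (pos_cons h); lra.
Qed.

Lemma off_ge0 s y : pos s -> 0 <= off s y.
Proof.
elim: s => [|z s IH] h //=; case: eqP => // _.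
have [hz _] := h z (mem_head _ _); have := IH (pos_cons h); lra.
Qed.

Lemma off_le s y : pos s -> y \in s -> off s y + E y <= \sum_(z <- s) E z.
Proof.
elim: s => [|z s IH] h //; rewrite inE big_cons /=.
have hz := sumE_ge0 (pos_cons h).
case: (eqVneq z y) => [<-|ne]; first by move=> _; lra.
rewrite /= => hy.
have := IH (pos_cons h) hy; lra.
Qed.

Lemma cval_sum s : \sum_(z <- s) E z <= cval E tau s.
Proof. by rewrite /cval le_max lexx orbT. Qed.

Lemma cval_Et s y : y \in s -> E y + tau y <= cval E tau s.
Proof.
move=> hy; rewrite /cval le_max; apply/orP; left.
exact: (le_bigmax_seq (0:R) y xpredT (fun z => E z + tau z) hy erefl).
Qed.

Lemma cval_ge0 s : pos s -> 0 <= cval E tau s.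
Proof. by move=> h; apply: le_trans (sumE_ge0 h) (cval_sum s). Qed.

Lemma round_mem s T b : uniq s -> b \in round T s -> b.1 \in s /\ b.2 = T + off s b.1.
Proof.
elim: s T => [|y s IH] T //= /andP[ny us]; rewrite inE => /orP[/eqP ->|hb] /=.
  by rewrite eqxx mem_head addr0.
have [h1 h2] := IH _ us hb; split; first by rewrite inE h1 orbT.
have -> : (y == b.1) = false by apply/eqP => e; rewrite e h1 in ny.
by rewrite h2 addrA.
Qed.

Lemma round_pw s T : pos s -> uniq s -> pairwise compat (round T s).
Proof.
elim: s T => [|y s IH] T //= h /andP[ny us]. rewrite (IH _ (pos_cons h) us) andbT.
apply/allP => b hb; have [h1 h2] := round_mem us hb.
have := off_ge0 b.1 (pos_cons h).
rewrite /compat /= h2; have -> : (y == b.1) = false by apply/eqP => e; rewrite e h1 in ny.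
rewrite andbT; lra.
Qed.

Definition good (a : G * R) (T : R) (s : seq G) : bool :=
  (a.2 + E a.1 <= T) && ((a.1 \in s) ==> (a.2 + E a.1 + tau a.1 <= T + off s a.1)).

Lemma good_mono a T T' s : T <= T' -> good a T s -> good a T' s.
Proof.
rewrite /good => le /andP[h1 h2]; apply/andP; split; first lra.
apply/implyP => /(implyP h2); lra.
Qed.

Lemma good_compat a T s b : pos s -> good a T s -> b.1 \in s -> T + off s b.1 <= b.2 ->
  compat a b.
Proof.
rewrite /good => h /andP[h1 h2] hb hle; have := off_ge0 b.1 h.
move=> ho; rewrite /compat; apply/andP; split; first lra.
apply/implyP => /eqP e; move: h2; rewrite e hb /=; lra.
Qed.

Lemma round_good s T b : pos s -> uniq s -> b \in round T s -> good b (T + cval E tau s) s.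
Proof.
move=> h us hb; have [h1 h2] := round_mem us hb.
have := off_le h h1; have := cval_sum s; have := cval_Et h1.
rewrite /good h1 h2 /=; move=> *; apply/andP; split; lra.
Qed.

Lemma rounds_mem n s T b : pos s -> uniq s -> b \in rounds n T s ->
  b.1 \in s /\ T + off s b.1 <= b.2.
Proof.
move=> h us; elim: n T => [|n IH] T //=; rewrite mem_cat => /orP[hb|hb].
  by have [-> ->] := round_mem us hb.
have [-> h2] := IH _ hb; split => //; have := cval_ge0 h; lra.
Qed.

Lemma rounds_good n s T b : pos s -> uniq s -> b \in rounds n T s ->
  good b (T + n%:R * cval E tau s) s.
Proof.
move=> h us; elim: n T => [|n IH] T //=; rewrite mem_cat => /orP[hb|hb].
  apply: good_mono (round_good h us hb); rewrite -natr1.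
  have := cval_ge0 h; have : (0 : R) <= n%:R by rewrite ler0n.
  move=> *; nra.
by apply: good_mono (IH _ hb); rewrite -natr1; lra.
Qed.

Lemma rounds_pw n s T : pos s -> uniq s -> pairwise compat (rounds n T s).
Proof.
move=> h us; elim: n T => [|n IH] T //=; rewrite pairwise_cat IH round_pw // !andbT.
apply/allrelP => a b ha hb; have ga := round_good h us ha.
have [h1 h2] := rounds_mem h us hb; exact: good_compat h ga h1 h2.
Qed.

Lemma gen_mem prev s T b : pos s -> uniq s -> b \in gen prev T s ->
  b.1 \in s /\ T + off s b.1 <= b.2.
Proof.
elim: s prev T => [|g s IH] prev T //= h /andP[ng us].
rewrite mem_cat inE => /orP[hb|/orP[/eqP ->|hb]].
- by apply: (rounds_mem h _ hb); rewrite /= ng us.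
- rewrite /= mem_head eqxx; split => //; have := cval_ge0 h.
  have : (0 : R) <= (M g - prev)%:R by rewrite ler0n.
  move=> *; nra.
- have [h1 h2] := IH _ _ (pos_cons h) us hb.
  rewrite inE h1 orbT; split => //.
  have -> : (g == b.1) = false by apply/eqP => e; rewrite e h1 in ng.
  have := cval_ge0 h; have : (0 : R) <= (M g - prev)%:R by rewrite ler0n.
  move=> *; nra.
Qed.

Lemma gen_pw prev s T : pos s -> uniq s -> pairwise compat (gen prev T s).
Proof.
elim: s prev T => [|g s IH] prev T //= h us; move: (us) => /andP[ng us'].
set n := (M g - prev)%N; set c := cval E tau s.
rewrite pairwise_cat rounds_pw //= (IH _ _ (pos_cons h) us') andbT.
have hrest : forall b, b \in (g, T + n%:R * cval E tau (g :: s)) ::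
     gen (M g) (T + n%:R * cval E tau (g :: s) + E g) s ->
     b.1 \in g :: s /\ T + n%:R * cval E tau (g :: s) + off (g :: s) b.1 <= b.2.
  move=> b; rewrite inE => /orP[/eqP ->|hb] /=; first by rewrite mem_head eqxx addr0.
  have [h1 h2] := gen_mem (pos_cons h) us' hb.
  rewrite inE h1 orbT; split => //.
  have -> : (g == b.1) = false by apply/eqP => e; rewrite e h1 in ng.
  lra.
apply/andP; split.
  apply/allrelP => a b ha hb; have ga := rounds_good h us ha.
  have [h1 h2] := hrest b hb; exact: good_compat h ga h1 h2.
apply/allP => b hb; have [h1 h2] := gen_mem (pos_cons h) us' hb.
apply: (good_compat (pos_cons h) _ h1 h2).
rewrite /good /= lexx /=; case: (boolP (g \in s)) => //; by rewrite (negbTE ng).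
Qed.

Lemma Rseq_ge0 prev s : pos s -> 0 <= Rseq E tau M prev s.
Proof.
elim: s prev => [|g s IH] prev h //=.
have := IH (M g) (pos_cons h); have := cval_ge0 h; have [hg _] := h g (mem_head _ _).
have : (0 : R) <= (M g - prev)%:R by rewrite ler0n.
move=> *; nra.
Qed.

Lemma gen_ub prev s T b : pos s -> uniq s -> b \in gen prev T s ->
  b.2 + E b.1 <= T + Rseq E tau M prev s.
Proof.
elim: s prev T => [|g s IH] prev T //= h hu; move: (hu) => /andP[ng us].
have hR := Rseq_ge0 (M g) (pos_cons h); have [hg _] := h g (mem_head _ _).
rewrite mem_cat inE => /orP[hb|/orP[/eqP ->|hb]].
- by have /andP[h1 _] := rounds_good h hu hb; lra.
- rewrite /=; lra.
- have := IH _ _ (pos_cons h) us hb; lra.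
Qed.

Lemma round_count s T y : uniq s -> count (fun a => a.1 == y) (round T s) = (y \in s).
Proof.
elim: s T => [|z s IH] T //= /andP[nz us]; rewrite IH // inE.
case: (eqVneq z y) => [e|ne] /=; last by [].
by subst; rewrite (negbTE nz).
Qed.

Lemma rounds_count n s T y : uniq s ->
  count (fun a => a.1 == y) (rounds n T s) = (n * (y \in s))%N.
Proof.
move=> us; elim: n T => [|n IH] T //=; by rewrite count_cat round_count // IH mulSn.
Qed.

Lemma gen_count prev s T y : uniq s -> sorted (fun a b => (M a <= M b)%N) s ->
  all (fun z => (prev <= M z)%N) s ->
  count (fun a => a.1 == y) (gen prev T s) = if y \in s then (M y - prev).+1 else 0%N.
Proof.
elim: s prev T => [|g s IH] prev T //= hu; move: (hu) => /andP[ng us] hs /andP[hp ha].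
have hs' := path_sorted hs.
have ha' : all (fun z => (M g <= M z)%N) s.
  exact: (order_path_min (fun b a c (h1 : (M a <= M b)%N) h2 => leq_trans h1 h2) hs).
rewrite count_cat rounds_count //= (IH _ _ us hs' ha') inE.
case: (eqVneq y g) => [->|ne] /=.
  by rewrite (negbTE ng) muln1 addn0 addn1.
rewrite add0n; case: ifP => hy; last by rewrite muln0.
have := allP ha' y hy; rewrite muln1 => le; rewrite addnS; congr S; lia.
Qed.
End Intra.
Lemma pw_either (T : eqType) (r : rel T) s a b : pairwise r s -> a \in s -> b \in s -> a != b ->
  r a b || r b a.
Proof.
elim: s => [|x s IH] //= => /andP[hx hs].
rewrite !inE => /orP[/eqP ->|ha] /orP[/eqP ->|hb] ne.
- by rewrite eqxx in ne.
- by rewrite (allP hx b hb).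
- by rewrite (allP hx a ha) orbT.
- exact: IH.
Qed.

Lemma pw_uniq (T : eqType) (r : rel T) s : pairwise r s -> (forall a, a \in s -> ~~ r a a) -> uniq s.
Proof.
elim: s => [|x s IH] //= => /andP[hx hs] hirr.
rewrite IH // ?andbT; last by move=> a ha; apply: hirr; rewrite inE ha orbT.
apply/negP => hxs; have := hirr x (mem_head _ _); by rewrite (allP hx x hxs).
Qed.

Lemma flatten_count0 (I T : eqType) (f : I -> seq T) (p : pred T) l :
  (forall x, x \in l -> count p (f x) = 0%N) -> count p (flatten (map f l)) = 0%N.
Proof.
elim: l => [|x l IH] //= h; rewrite count_cat h ?mem_head // IH // => z hz.
by apply: h; rewrite inE hz orbT.
Qed.

Lemma flatten_count (I T : eqType) (f : I -> seq T) (p : pred T) l x0 :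
  uniq l -> x0 \in l -> (forall x, x \in l -> x != x0 -> count p (f x) = 0%N) ->
  count p (flatten (map f l)) = count p (f x0).
Proof.
elim: l => [|x l IH] //= /andP[nx ul]; rewrite inE count_cat => hx0 h0.
case: (eqVneq x x0) => [e|ne].
  subst x; rewrite flatten_count0 ?addn0 // => z hz; apply: h0; first by rewrite inE hz orbT.
  by apply/eqP => e; move: nx; rewrite -e hz.
rewrite (h0 x) ?mem_head // add0n; apply: IH => //.
  by case/orP: hx0 => // /eqP e; rewrite e eqxx in ne.
by move=> z hz nz; apply: h0 => //; rewrite inE hz orbT.
Qed.

Lemma flatten_uniq (I T : eqType) (f : I -> seq T) l :
  uniq l -> (forall x, x \in l -> uniq (f x)) ->
  (forall x y a, x \in l -> y \in l -> a \in f x -> a \in f y -> x = y) ->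
  uniq (flatten (map f l)).
Proof.
elim: l => [|x l IH] //= /andP[nx ul] hu hd.
rewrite cat_uniq hu ?mem_head // IH //; last 2 first.
- by move=> z hz; apply: hu; rewrite inE hz orbT.
- by move=> y z a hy hz; apply: hd; rewrite inE ?hy ?hz orbT.
rewrite andbT; apply/hasPn => a /flattenP [t /mapP [y hy ->] ha]; apply/negP => hax.
have e := hd x y a (mem_head _ _) _ hax ha; rewrite inE hy orbT in e.
by move: nx; rewrite (e is_true_true) hy.
Qed.

Lemma sum_sub (I : finType) (R : realFieldType) (A B : {set I}) (F : I -> R) :
  A \subset B -> (forall i, i \in B -> 0 <= F i) ->
  \sum_(i in A) F i <= \sum_(i in B) F i.
Proof.
move=> sAB h; rewrite [X in _ <= X](big_setID A) /= (setIidPr sAB) lerDl.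
by apply: sumr_ge0 => i; rewrite inE => /andP[_ hi]; apply: h.
Qed.

Unset Implicit Arguments.

Theorem mainTheorem6
  (V Pth Cls G : finType) (R : realFieldType)
  (xi : Pth -> {set V}) (P : {set Pth}) (Pi : {set {set Pth}})
  (Phi : {set Cls}) (PiC : Cls -> {set Pth}) (Z : Cls -> {set G})
  (pathOf : G -> Pth) (E tau : G -> R) (M : G -> nat)
  (hPi : partition Pi P)
  (hcell : forall phi, phi \in Phi -> PiC phi \in Pi)
  (hWB : well_behaved xi PiC Phi)
  (hpath : forall phi g, phi \in Phi -> g \in Z phi -> pathOf g \in PiC phi)
  (hE : forall g, g \in ZPhi Z Phi -> 0 < E g)
  (htau : forall g, g \in ZPhi Z Phi -> 0 <= tau g)
  (hM : forall g, g \in ZPhi Z Phi -> (0 < M g)%N)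
  (t0 : R) :
  exists S : seq (G * R),
    [/\ valid_schedule xi pathOf E tau S,
        (forall a, a \in S -> a.1 \in ZPhi Z Phi),
        (forall g, g \in ZPhi Z Phi -> count (fun a => a.1 == g) S = M g) &
        (forall a, a \in S ->
           t0 <= a.2 /\ a.2 + E a.1 <= t0 + Rtot xi PiC Z E tau M Phi)].
Proof.
case: hWB => hWB1 hWB2.
set xC := xiC xi PiC.
pose lst phi := sort (fun a b => (M a <= M b)%N) (enum (Z phi)).
have memZ : forall phi g, phi \in Phi -> g \in Z phi -> g \in ZPhi Z Phi.
  by move=> phi g hp hg; apply/bigcupP; exists phi.
have lst_mem : forall phi y, (y \in lst phi) = (y \in Z phi).
  by move=> *; rewrite mem_sort mem_enum.
have lst_uniq : forall phi, uniq (lst phi) by move=> phi; rewrite sort_uniq enum_uniq.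
have lst_sorted : forall phi, sorted (fun a b => (M a <= M b)%N) (lst phi).
  by move=> phi; apply: sort_sorted => a b; exact: leq_total.
have lst_pos : forall phi, phi \in Phi -> pos E tau (lst phi).
  move=> phi hp y; rewrite lst_mem => hy; have hz := memZ _ _ hp hy.
  by split; [exact: hE|exact: htau].
have Rcls_ge0 : forall phi, phi \in Phi -> 0 <= Rcls Z E tau M phi.
  by move=> phi hp; exact: (Rseq_ge0 M 1 (lst_pos _ hp)).
pose Anc phi := [set psi in Phi | (xC phi != set0) && (xC phi \proper xC psi)].
pose st phi := t0 + \sum_(psi in Anc phi) Rcls Z E tau M psi.
have AncPhi : forall phi psi, psi \in Anc phi -> psi \in Phi.
  by move=> phi psi; rewrite inE => /andP[].
have st_ge : forall phi, t0 <= st phi.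
  move=> phi; rewrite /st lerDl; apply: sumr_ge0 => psi hpsi.
  by apply: Rcls_ge0; apply: AncPhi hpsi.
have nAnc : forall phi, phi \notin Anc phi by move=> phi; rewrite inE properxx !andbF.
have hchain : forall phi, phi \in Phi -> st phi + Rcls Z E tau M phi <= t0 + Rtot xi PiC Z E tau M Phi.
  move=> phi hp.
  have -> : st phi + Rcls Z E tau M phi = t0 + \sum_(psi in phi |: Anc phi) Rcls Z E tau M psi.
    rewrite /st big_setU1 ?nAnc //=; lra.
  rewrite lerD2l /Rtot.
  apply: (le_bigmax_cond _ (fun Th : {set Cls} => \sum_(th in Th) Rcls Z E tau M th)).
  apply/andP; split.
    apply/subsetP => x; rewrite in_setU1 => /orP[/eqP ->|]; [done|exact: AncPhi].
  apply/forallP => t1; apply/implyP => h1; apply/forallP => t2; apply/implyP => h2.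
  rewrite /ge_xi; case: (t1 =P t2) => [->|ne]; first by rewrite eqxx.
  have n1 : (t1 == t2) = false by apply/eqP.
  have n2 : (t2 == t1) = false by apply/eqP => e; apply: ne.
  rewrite n2 /=; move/eqP: n1 => {}ne.
  move: h1 h2; rewrite !in_setU1 => /orP[/eqP e1|h1] /orP[/eqP e2|h2].
  - by case: ne; rewrite e1 e2.
  - by move: h2; rewrite e1 inE => /and3P[_ _ ->]; rewrite orbT.
  - by move: h1; rewrite e2 inE => /and3P[_ _ ->].
  - move: h1 h2; rewrite !inE => /and3P[p1 n1 pr1] /and3P[p2 _ pr2].
    rewrite orbC; apply: (hWB2 _ _ p1 p2); first by apply/eqP.
    case/set0Pn: n1 => v hv; apply/set0Pn; exists v.
    by rewrite inE (subsetP (proper_sub pr1)) ?(subsetP (proper_sub pr2)).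
have horder : forall p1 p2, p1 \in Phi -> p2 \in Phi -> xC p1 \proper xC p2 -> xC p1 != set0 ->
    st p2 + Rcls Z E tau M p2 <= st p1.
  move=> p1 p2 h1 h2 pr n1.
  have : \sum_(psi in p2 |: Anc p2) Rcls Z E tau M psi <= \sum_(psi in Anc p1) Rcls Z E tau M psi.
    apply: sum_sub; last by move=> i hi; apply: Rcls_ge0; apply: AncPhi hi.
    apply/subsetP => x; rewrite in_setU1 => /orP[/eqP ->|]; first by rewrite inE h2 n1 pr.
    rewrite !inE => /and3P[hx _ pr2]; rewrite hx n1 /=; exact: proper_trans pr pr2.
  by rewrite big_setU1 ?nAnc //= /st; lra.
have hdisj : forall p1 p2 g, p1 \in Phi -> p2 \in Phi -> g \in Z p1 -> g \in Z p2 -> p1 = p2.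
  move=> p1 p2 g h1 h2 g1 g2.
  have q1 := hpath _ _ h1 g1; have q2 := hpath _ _ h2 g2.
  case/and3P: hPi => _ hT _.
  case: (eqVneq (PiC p1) (PiC p2)) => [e|ne].
    case: (eqVneq p1 p2) => // ne; have := hWB1 _ _ h1 h2 ne.
    by rewrite /xC /xiC e eqxx.
  have := trivIsetP hT _ _ (hcell _ h1) (hcell _ h2) ne.
  by rewrite -setI_eq0 => /eqP/setP/(_ (pathOf g)); rewrite !inE q1 q2.
have hxi : forall phi g v, phi \in Phi -> g \in Z phi -> v \in xi (pathOf g) -> v \in xC phi.
  by move=> phi g v hp hg hv; apply/bigcupP; exists (pathOf g) => //; apply: hpath.
pose sched phi := gen E tau M 1 (st phi) (lst phi).
have sched_in : forall phi a, phi \in Phi -> a \in sched phi ->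
    [/\ a.1 \in Z phi, st phi <= a.2 & a.2 + E a.1 <= st phi + Rcls Z E tau M phi].
  move=> phi a hp ha; have [h1 h2] := gen_mem (lst_pos _ hp) (lst_uniq _) ha.
  have h3 := gen_ub (lst_pos _ hp) (lst_uniq _) ha.
  have h0 := off_ge0 a.1 (lst_pos _ hp).
  rewrite -lst_mem; split => //; lra.
have sched_pw : forall phi, phi \in Phi -> pairwise (compat E tau) (sched phi).
  by move=> phi hp; apply: gen_pw; [exact: lst_pos|exact: lst_uniq].
set S := flatten [seq sched phi | phi <- enum Phi].
have memS : forall a, a \in S -> exists2 phi, phi \in Phi & a \in sched phi.
  move=> a /flattenP [t /mapP [phi hphi ->] ha]; exists phi => //; by rewrite -mem_enum.
have Epos : forall phi a, phi \in Phi -> a \in sched phi -> 0 < E a.1.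
  by move=> phi a hp ha; case: (sched_in _ _ hp ha) => h1 _ _; apply: hE; apply: memZ h1.
exists S; split.
- split; [|split].
  + apply: flatten_uniq; first exact: enum_uniq.
      move=> x; rewrite mem_enum => hx; apply: (pw_uniq (sched_pw _ hx)) => a ha.
      rewrite /compat negb_and; apply/orP; left; rewrite -ltNge; have := Epos _ _ hx ha; lra.
    move=> x y a; rewrite !mem_enum => hx hy ha hb.
    case: (sched_in _ _ hx ha) => g1 _ _; case: (sched_in _ _ hy hb) => g2 _ _.
    exact: hdisj hx hy g1 g2.
  + move=> [a [b [ha hb nab hv /andP[hab1 hab2]]]].
    have [pa hpa ha'] := memS _ ha; have [pb hpb hb'] := memS _ hb.
    case: (sched_in _ _ hpa ha') => ga sta ena; case: (sched_in _ _ hpb hb') => gb stb enb.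
    have Eb := Epos _ _ hpb hb'.
    case/set0Pn: hv => v; rewrite inE => /andP[va vb].
    have va' := hxi _ _ _ hpa ga va; have vb' := hxi _ _ _ hpb gb vb.
    case: (eqVneq pa pb) => [e|ne].
      subst pb; case/orP: (pw_either (sched_pw _ hpa) ha' hb' nab) => /andP[c1 _]; lra.
    have ni : xC pa :&: xC pb != set0 by apply/set0Pn; exists v; rewrite inE va' vb'.
    have na : xC pa != set0 by apply/set0Pn; exists v.
    have nb : xC pb != set0 by apply/set0Pn; exists v.
    case/orP: (hWB2 _ _ hpa hpb ne ni) => pr.
      have := horder _ _ hpa hpb pr na; lra.
    have := horder _ _ hpb hpa pr nb; lra.
  + move=> [a [b [[ha hb e lt] [_ hsep]]]].
    have [pa hpa ha'] := memS _ ha; have [pb hpb hb'] := memS _ hb.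
    case: (sched_in _ _ hpa ha') => ga _ _; case: (sched_in _ _ hpb hb') => gb _ _.
    have Eb := Epos _ _ hpb hb'.
    rewrite -e in gb; have epp := hdisj _ _ _ hpa hpb ga gb; subst pb.
    have nab : a != b by apply/eqP => eab; rewrite eab ltxx in lt.
    case/orP: (pw_either (sched_pw _ hpa) ha' hb' nab) => /andP[c1 c2].
      have hab : a.1 == b.1 by apply/eqP.
      by have := implyP c2 hab; lra.
    clear c2 e; lra.
- by move=> a ha; have [p hp ha'] := memS _ ha; case: (sched_in _ _ hp ha') => g1 _ _; apply: memZ g1.
- move=> g hg; have /bigcupP [p0 hp0 g0] := hg.
  rewrite /S (flatten_count (x0 := p0) (enum_uniq _)) ?mem_enum //.
    rewrite /sched gen_count ?lst_uniq ?lst_sorted ?lst_mem ?g0 //.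
      by have := hM g hg; lia.
    by apply/allP => z; rewrite lst_mem => hz; apply: hM; apply: memZ hz.
  move=> x; rewrite mem_enum => hx nx; rewrite /sched gen_count ?lst_uniq ?lst_sorted ?lst_mem;
    last by apply/allP => z; rewrite lst_mem => hz; apply: hM; apply: memZ hz.
  all: try by [].
  by case: ifP => // gx; case/eqP: nx; exact: hdisj hx hp0 gx g0.
- move=> a ha; have [p hp ha'] := memS _ ha; case: (sched_in _ _ hp ha') => _ h1 h2.
  have := st_ge p; have := hchain _ hp; split; lra.
Qed.
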